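(* Let $f,f'\colon\mathbb F_2^{10}\to\mathbb F_2$ be given by $f(\mathbf x)=x_1x_6\oplus x_2x_7\oplus x_3x_8\oplus x_4x_9\oplus x_5x_{10}\oplus x_1x_2x_3x_4x_5$ and $f'(\mathbf x)=f(\mathbf x)\oplus x_4\oplus x_6\oplus x_8\oplus x_{10}\oplus x_1x_2\oplus x_2x_3\oplus x_1x_2x_3\oplus x_2x_4x_5\oplus x_1x_2x_4x_5\oplus x_2x_3x_4x_5$. Then $f$ and $f'$ are bent and not extended-affine equivalent, yet the translation designs $\operatorname{dev}(D_f)$ and $\operatorname{dev}(D_{f'})$ are isomorphic.
   Context: For a Boolean function $f$ on $\mathbb F_2^n$, $D_f=\{\mathbf x: f(\mathbf x)=1\}$, and $\operatorname{dev}(D_f)$ is the incidence structure with point set $\mathbb F_2^n$ and blocks $D_f+\mathbf g$, $\mathbf g\in\mathbb F_2^n$. Boolean functions $f,f'$ on $\mathbb F_2^n$ are EA-equivalent if $f=f'\circ A_2\oplus A_3$ for an affine permutation $A_2$ of $\mathbb F_2^n$ and an affine function $A_3$. A Boolean function is bent if all its Walsh coefficients $\sum_{\mathbf x}(-1)^{f(\mathbf x)\oplus\langle\mathbf a,\mathbf x\rangle}$ equal $\pm2^{n/2}$. Isomorphism of incidence structures: $M=PM'Q$ for permutation matrices $P,Q$ acting on incidence matrices. *)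

(* Defs.v *)
From HB Require Import structures.
From mathcomp Require Import all_boot all_order all_algebra all_fingroup.
Set Implicit Arguments. Unset Strict Implicit. Unset Printing Implicit Defensive.
Import GRing.Theory Num.Theory.
Local Open Scope ring_scope.

Notation vec n := 'rV['F_2]_n.

Definition boolfun (n : nat) := vec n -> 'F_2.

Definition dotv (n : nat) (a x : vec n) : 'F_2 := \sum_(i < n) a ord0 i * x ord0 i.

Definition supp (n : nat) (f : boolfun n) : {set vec n} := [set x | f x == 1].

Definition walsh (n : nat) (f : boolfun n) (a : vec n) : int :=
  \sum_(x : vec n) (-1) ^+ (nat_of_ord (f x + dotv a x)).

Definition is_bent (n : nat) (f : boolfun n) : Prop :=
  forall a : vec n, walsh f a = 2 ^+ (n./2) \/ walsh f a = - 2 ^+ (n./2).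

(* EA-equivalence: f = f' o A2 + A3, A2 affine permutation x |-> x M + b
   (M invertible), A3 affine function x |-> <u,x> + c. *)
Definition EA_equiv (n : nat) (f f' : boolfun n) : Prop :=
  exists (M : 'M['F_2]_n) (b u : vec n) (c : 'F_2),
    M \in unitmx /\ forall x : vec n, f x = f' (x *m M + b) + (dotv u x + c).

Definition translate (n : nat) (D : {set vec n}) (g : vec n) : {set vec n} :=
  [set x + g | x in D].

(* incidence matrix of dev(D_f): rows = points, columns = blocks D_f + g,
   both indexed via the enumeration of F_2^n *)
Definition dev_inc (n : nat) (f : boolfun n) : 'M[int]_(#|{: vec n}|) :=
  \matrix_(i, j) ((enum_val i \in translate (supp f) (enum_val j)) : nat)%:R.

Definition inc_iso (k : nat) (M M' : 'M[int]_k) : Prop :=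
  exists (s t : 'S_k), M = perm_mx s *m M' *m perm_mx t.

(* coordinate x_k, 1 <= k <= 10 *)
Definition xc (x : vec 10) (k : nat) : 'F_2 := x ord0 (@inord 9 k.-1).

Definition f10 : boolfun 10 := fun x =>
  xc x 1 * xc x 6 + xc x 2 * xc x 7 + xc x 3 * xc x 8 + xc x 4 * xc x 9
  + xc x 5 * xc x 10 + xc x 1 * xc x 2 * xc x 3 * xc x 4 * xc x 5.

Definition f10' : boolfun 10 := fun x =>
  f10 x + xc x 4 + xc x 6 + xc x 8 + xc x 10 + xc x 1 * xc x 2
  + xc x 2 * xc x 3 + xc x 1 * xc x 2 * xc x 3 + xc x 2 * xc x 4 * xc x 5
  + xc x 1 * xc x 2 * xc x 4 * xc x 5 + xc x 2 * xc x 3 * xc x 4 * xc x 5.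

(* Main.v *)
Require Import Defs.
From HB Require Import structures.
From mathcomp Require Import all_boot all_order all_algebra all_fingroup.
Set Implicit Arguments. Unset Strict Implicit. Unset Printing Implicit Defensive.
Import GRing.Theory.
Local Open Scope ring_scope.

Definition b2F (b : bool) : 'F_2 := (b : nat)%:R.

Lemma b2F_add a b : b2F a + b2F b = b2F (a (+) b).
Proof. by case: a; case: b; apply/val_inj. Qed.
Lemma b2F_mul a b : b2F a * b2F b = b2F (a && b).
Proof. by case: a; case: b; apply/val_inj. Qed.
Lemma b2F_val b : nat_of_ord (b2F b) = b.
Proof. by case: b. Qed.
Lemma b2F_eq1 b : (b2F b == 1) = b.
Proof. by case: b. Qed.
Lemma F2_cases (x : 'F_2) : x = b2F (x != 0).
Proof. by case: x => [[|[|//]] ?]; apply/val_inj. Qed.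
Lemma F2_addxx (x : 'F_2) : x + x = 0.
Proof. by rewrite [x]F2_cases b2F_add addbb. Qed.
Lemma F2_opp (x : 'F_2) : - x = x.
Proof. by rewrite [x]F2_cases; case: (x != 0); apply/val_inj. Qed.

Definition tovec n (s : seq bool) : vec n := \row_(i < n) b2F (nth false s i).
Definition ofvec n (x : vec n) : seq bool := [seq x ord0 i != 0 | i <- enum 'I_n].

Fixpoint pts n : seq (seq bool) :=
  if n is n'.+1 then [seq b :: s | b <- [:: false; true], s <- pts n'] else [:: [::]].

Lemma mem_pts n s : (s \in pts n) = (size s == n).
Proof.
elim: n s => [|n IH] s; first by case: s.
change (pts n.+1) with [seq b :: s | b <- [:: false; true], s <- pts n].
case: s => [|b s].
  by apply/negbTE/negP => /allpairsP [[b' s'] [_ _ /= H]].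
rewrite [size _]/= eqSS -IH.
apply/allpairsP/idP => [[[b' s'] /= [_ Hs [_ ->]]] // | Hs].
by exists (b, s); split => //; case: b.
Qed.

Lemma uniq_pts n : uniq (pts n).
Proof.
elim: n => [|n IH] //.
change (pts n.+1) with [seq b :: s | b <- [:: false; true], s <- pts n].
rewrite allpairs_uniq //.
by move=> [b s] [b' s'] _ _ /= [-> ->].
Qed.

Lemma size_ofvec n (x : vec n) : size (ofvec x) = n.
Proof. by rewrite size_map size_enum_ord. Qed.

Lemma ofvecK n (x : vec n) : tovec n (ofvec x) = x.
Proof.
apply/rowP => i; rewrite mxE (nth_map i); last by rewrite size_enum_ord.
by rewrite nth_ord_enum -F2_cases.
Qed.

Lemma tovecK n s : size s = n -> ofvec (tovec n s) = s.
Proof.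
move=> Hs; apply: (@eq_from_nth _ false); first by rewrite size_ofvec.
move=> i; rewrite size_ofvec => Hi.
rewrite (nth_map (Ordinal Hi)) ?size_enum_ord // mxE.
have -> : nth (Ordinal Hi) (enum 'I_n) i = Ordinal Hi.
  by apply/val_inj; rewrite /= nth_enum_ord.
by case: (nth false s i).
Qed.

Lemma sum_pts (R : nmodType) n (F : vec n -> R) :
  \sum_(x : vec n) F x = \sum_(s <- pts n) F (tovec n s).
Proof.
rewrite -(big_map (tovec n) xpredT) -big_enum /=.
apply: perm_big; apply: uniq_perm.
- exact: enum_uniq.
- rewrite map_inj_in_uniq ?uniq_pts // => s t.
  rewrite !mem_pts => /eqP Hs /eqP Ht Heq.
  by rewrite -(tovecK Hs) -(tovecK Ht) Heq.
- move=> x; rewrite mem_enum; symmetry; apply/mapP.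
  by exists (ofvec x); rewrite ?ofvecK // mem_pts size_ofvec.
Qed.

Definition xorl (s t : seq bool) : seq bool := [seq p.1 (+) p.2 | p <- zip s t].
Fixpoint dotb (s t : seq bool) : bool :=
  match s, t with a :: s', b :: t' => (a && b) (+) dotb s' t' | _, _ => false end.

Lemma size_xorl s t : size s = size t -> size (xorl s t) = size s.
Proof. by move=> H; rewrite size_map size_zip H minnn. Qed.

Lemma tovecD n s t : size s = size t ->
  tovec n s + tovec n t = tovec n (xorl s t).
Proof.
move=> H; apply/rowP => i; rewrite !mxE b2F_add.
case: (ltnP i (size s)) => Hi.
  rewrite (nth_map (false, false)); last by rewrite size_zip -H minnn.
  by rewrite (nth_zip false false _ H).
by rewrite !nth_default ?size_xorl -?H.
Qed.

Lemma dotv_tovec n s t : size s = n -> size t = n ->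
  dotv (tovec n s) (tovec n t) = b2F (dotb s t).
Proof.
elim: n s t => [|n IH] [|a s] [|b t] //=; first by rewrite /dotv big_ord0.
move=> [Hs] [Ht]; rewrite /dotv big_ord_recl !mxE /= b2F_mul -b2F_add.
congr (_ + _); rewrite -IH //; apply: eq_bigr => i _; rewrite !mxE.
by [].
Qed.

Definition fb10 (x1 x2 x3 x4 x5 x6 x7 x8 x9 x10 : bool) : bool :=
  (x1 && x6) (+) (x2 && x7) (+) (x3 && x8) (+) (x4 && x9)
  (+) (x5 && x10) (+) (x1 && x2 && x3 && x4 && x5).
Definition fb10' (x1 x2 x3 x4 x5 x6 x7 x8 x9 x10 : bool) : bool :=
  fb10 x1 x2 x3 x4 x5 x6 x7 x8 x9 x10 (+) x4 (+) x6 (+) x8 (+) x10 (+) (x1 && x2)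
  (+) (x2 && x3) (+) (x1 && x2 && x3) (+) (x2 && x4 && x5)
  (+) (x1 && x2 && x4 && x5) (+) (x2 && x3 && x4 && x5).
Definition lift10 (F : bool -> bool -> bool -> bool -> bool -> bool -> bool -> bool -> bool -> bool -> bool)
  (s : seq bool) : bool :=
  match s with [:: x1; x2; x3; x4; x5; x6; x7; x8; x9; x10] => F x1 x2 x3 x4 x5 x6 x7 x8 x9 x10
  | _ => false end.
Definition f10b := lift10 fb10.
Definition f10b' := lift10 fb10'.

Lemma f10_tovec s : size s = 10%N -> f10 (tovec 10 s) = b2F (f10b s).
Proof.
case: s => [|x1 [|x2 [|x3 [|x4 [|x5 [|x6 [|x7 [|x8 [|x9 [|x10 [|? ?]]]]]]]]]]] // _.
by rewrite /f10 /xc !mxE !inordK //= !b2F_mul !b2F_add.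
Qed.

Lemma f10'_tovec s : size s = 10%N -> f10' (tovec 10 s) = b2F (f10b' s).
Proof.
case: s => [|x1 [|x2 [|x3 [|x4 [|x5 [|x6 [|x7 [|x8 [|x9 [|x10 [|? ?]]]]]]]]]]] // _.
by rewrite /f10' /f10 /xc !mxE !inordK //= !b2F_mul !b2F_add.
Qed.

Lemma sum_sign (T : Type) (L : seq T) (P : pred T) :
  \sum_(s <- L) ((-1) ^+ (P s : nat) : int) = (count (predC P) L)%:Z - (count P L)%:Z.
Proof.
elim: L => [|x L IH]; first by rewrite big_nil.
rewrite big_cons IH /=; case: (P x) => /=.
  rewrite expr1 add0n PoszD opprD addrCA; congr (_ + _); by rewrite addrC.
by rewrite expr0 add0n PoszD addrA.
Qed.

Lemma size_pts n : size (pts n) = (2 ^ n)%N.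
Proof.
elim: n => [|n IH] //.
change (pts n.+1) with [seq b :: s | b <- [:: false; true], s <- pts n].
by rewrite size_allpairs IH expnS.
Qed.

Definition bentcheck (hb : seq bool -> bool) : bool :=
  all (fun sa => let c := count (fun s => hb s (+) dotb sa s) (pts 10) in
                 (c == 496)%N || (c == 528)%N) (pts 10).

Lemma bent_of_check (h : boolfun 10) hb :
  (forall s, size s = 10%N -> h (tovec 10 s) = b2F (hb s)) ->
  bentcheck hb -> is_bent h.
Proof.
move=> Hh /allP Hc a.
have Ha : size (ofvec a) = 10%N by rewrite size_ofvec.
rewrite -(ofvecK a); set sa := ofvec a.
have Hw : walsh h (tovec 10 sa) =
   \sum_(s <- pts 10) ((-1) ^+ ((hb s (+) dotb sa s) : nat) : int).
  rewrite /walsh sum_pts big_seq [RHS]big_seq; apply: eq_bigr => s.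
  rewrite mem_pts => /eqP Hs.
  by rewrite Hh // dotv_tovec // b2F_add b2F_val.
rewrite Hw sum_sign.
have := Hc sa; rewrite mem_pts Ha => /(_ isT).
set c := count _ _ => Hc'.
have Hsum : (count (predC (fun s => hb s (+) dotb sa s)) (pts 10) = 1024 - c)%N.
  have -> : 1024%N = size (pts 10) by rewrite size_pts.
  by rewrite -(count_predC (fun s => hb s (+) dotb sa s)) addKn.
rewrite Hsum.
by case/orP: Hc' => /eqP ->; [left|right].
Qed.

Lemma vaddxx n (q : vec n) : q + q = 0.
Proof. by apply/rowP => i; rewrite !mxE F2_addxx. Qed.

Lemma mem_translate n (D : {set vec n}) p q : (p \in translate D q) = (p + q \in D).
Proof.
apply/imsetP/idP => [[x Hx ->]|H]; first by rewrite -addrA vaddxx addr0.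
by exists (p + q) => //; rewrite -addrA vaddxx addr0.
Qed.

Lemma iso_of (f f' : boolfun 10) (sg tu : vec 10 -> vec 10) :
  injective sg -> injective tu ->
  (forall p q, (f (p + q) == 1) = (f' (sg p + tu q) == 1)) ->
  inc_iso (dev_inc f) (dev_inc f').
Proof.
move=> Is It H.
pose sf (i : 'I_#|{: vec 10}|) := enum_rank (sg (enum_val i)).
pose tf (i : 'I_#|{: vec 10}|) := enum_rank (tu (enum_val i)).
have Isf : injective sf.
  by move=> i j /enum_rank_inj /Is /enum_val_inj.
have Itf : injective tf.
  by move=> i j /enum_rank_inj /It /enum_val_inj.
exists (perm Isf), ((perm Itf)^-1)%g.
rewrite -row_permE -col_permE; apply/matrixP => i j.
rewrite !mxE !permE /sf /tf !enum_rankK !mem_translate !inE H.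
by [].
Qed.

Definition map10 (F : bool -> bool -> bool -> bool -> bool -> bool -> bool -> bool -> bool -> bool -> seq bool)
  (s : seq bool) : seq bool :=
  match s with [:: x1; x2; x3; x4; x5; x6; x7; x8; x9; x10] => F x1 x2 x3 x4 x5 x6 x7 x8 x9 x10
  | _ => [::] end.

Definition sgb := map10 (fun x1 x2 x3 x4 x5 x6 x7 x8 x9 x10 =>
  [:: ~~ x1; x2; ~~ x3; x4; x5 (+) x1 (+) true;
      x6 (+) (x2 && x3) (+) x10; x7 (+) (x1 && x3) (+) true; x8 (+) (x1 && x2); x9 (+) true; x10]).
Definition sgb' := map10 (fun X1 X2 X3 X4 X5 X6 X7 X8 X9 X10 =>
  let x1 := ~~ X1 in let x2 := X2 in let x3 := ~~ X3 in
  [:: x1; x2; x3; X4; X5 (+) X1;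
      X6 (+) (x2 && x3) (+) X10; X7 (+) (x1 && x3) (+) true; X8 (+) (x1 && x2); X9 (+) true; X10]).
Definition tub := map10 (fun a1 a2 a3 a4 a5 b1 b2 b3 b4 b5 =>
  [:: a1; a2; a3; a4; a5 (+) a1; b1 (+) (a2 && a3) (+) b5; b2 (+) (a1 && a3); b3 (+) (a1 && a2); b4; b5]).
Definition tub' := map10 (fun a1 a2 a3 a4 a5 b1 b2 b3 b4 b5 =>
  [:: a1; a2; a3; a4; a5 (+) a1; b1 (+) (a2 && a3) (+) b5; b2 (+) (a1 && a3); b3 (+) (a1 && a2); b4; b5]).

Definition invcheck (F G : seq bool -> seq bool) : bool :=
  all (fun s => (size (F s) == 10)%N && (G (F s) == s)) (pts 10).

Definition isocheck : bool :=
  all (fun p => let sp := sgb p in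
     all (fun q => f10b (xorl p q) == f10b' (xorl sp (tub q))) (pts 10)) (pts 10).

Lemma inv_check_c1 : invcheck sgb sgb'. Proof. vm_compute. reflexivity. Qed.
Lemma inv_check_c2 : invcheck tub tub'. Proof. vm_compute. reflexivity. Qed.
Lemma iso_check_c3 : isocheck. Proof. vm_compute. reflexivity. Qed.

Lemma liftinj F G : invcheck F G ->
  injective (fun x : vec 10 => tovec 10 (F (ofvec x))).
Proof.
move=> /allP H x y Hxy.
have Hx := H (ofvec x); have Hy := H (ofvec y).
rewrite !mem_pts !size_ofvec in Hx Hy.
case/andP: (Hx isT) => /eqP Sx /eqP Gx; case/andP: (Hy isT) => /eqP Sy /eqP Gy.
have := congr1 (fun z => tovec 10 (G (ofvec z))) Hxy => /=.
by rewrite !tovecK // Gx Gy !ofvecK.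
Qed.

Lemma liftsize F G s : invcheck F G -> size s = 10%N -> size (F s) = 10%N.
Proof.
move=> /allP H Hs; have := H s; rewrite mem_pts Hs => /(_ isT) /andP [/eqP -> _].
by [].
Qed.

Lemma iso_part : inc_iso (dev_inc f10) (dev_inc f10').
Proof.
apply: (iso_of (liftinj inv_check_c1) (liftinj inv_check_c2)) => p q.
have Sp := size_ofvec p; have Sq := size_ofvec q.
have Sp' := liftsize inv_check_c1 Sp; have Sq' := liftsize inv_check_c2 Sq.
rewrite -{1}(ofvecK p) -{1}(ofvecK q) !tovecD ?Sp ?Sq ?Sp' ?Sq' //.
rewrite f10_tovec ?size_xorl ?Sp ?Sq // f10'_tovec ?size_xorl ?Sp' ?Sq' //.
rewrite !b2F_eq1.
have /allP := iso_check_c3 => /(_ (ofvec p)); rewrite mem_pts Sp => /(_ isT) /allP.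
by move=> /(_ (ofvec q)); rewrite mem_pts Sq => /(_ isT) /eqP.
Qed.

Lemma F2_ind (P : 'F_2 -> Prop) : P 0 -> P 1 -> forall x, P x.
Proof.
move=> P0 P1 x; rewrite [x]F2_cases; case: (x != 0) => //.
Qed.

Ltac f2 := let x := fresh "x" in
  repeat (intro x; pattern x; revert x; apply: F2_ind); by apply/val_inj.

Lemma f2_test : forall x y z : 'F_2, x + y = (z + y) + (x + z).
Proof. f2. Qed.

Lemma dotvD n (u x y : vec n) : dotv u (x + y) = dotv u x + dotv u y.
Proof. by rewrite /dotv -big_split; apply: eq_bigr => i _; rewrite mxE mulrDr. Qed.

Definition D (h : boolfun 10) (a : vec 10) : boolfun 10 := fun z => h (z + a) + h z.

Lemma d1 h a v w : D h (a + v) w = D h a w + D h v (w + a).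
Proof.
rewrite /D addrA; move: (h (w + a + v)) (h w) (h (w + a)); f2.
Qed.

Lemma d2 (h1 h2 : boolfun 10) b w :
  D (fun x => h1 x + h2 x) b w = D h1 b w + D h2 b w.
Proof. by rewrite /D addrACA. Qed.

Lemma d3 h a v w : D (D h a) v w = D (D h v) a w.
Proof.
rewrite /D (addrAC w v a).
move: (h (w + a + v)) (h (w + v)) (h (w + a)) (h w); f2.
Qed.

Lemma d4 (h : boolfun 10) beta k : (forall w, h w = dotv beta w + k) ->
  forall a w, D h a w = dotv beta a.
Proof.
move=> H a w; rewrite /D !H dotvD; clear H.
move: (dotv beta w) (dotv beta a) k; f2.
Qed.

Lemma d5 (h : boolfun 10) k : (forall w, h w = k) -> forall a w, D h a w = 0.
Proof. by move=> H a w; rewrite /D !H F2_addxx. Qed.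

Lemma d6 (h1 h2 : boolfun 10) : (forall w, h1 w = h2 w) -> forall a w, D h1 a w = D h2 a w.
Proof. by move=> H a w; rewrite /D !H. Qed.

Definition D3 h a b c := D (D (D h a) b) c.

Lemma Dcomp (h h' : boolfun 10) (M : 'M['F_2]_10) b0 (l : vec 10 -> 'F_2) :
  (forall z, h z = h' (z *m M + b0) + l z) ->
  forall a z, D h a z = D h' (a *m M) (z *m M + b0) + (l (z + a) + l z).
Proof.
move=> H a z; rewrite /D !H mulmxDl (addrAC (z *m M)).
by rewrite addrACA.
Qed.

Lemma D3_EA (f f' : boolfun 10) (M : 'M['F_2]_10) b0 u c :
  (forall x, f x = f' (x *m M + b0) + (dotv u x + c)) ->
  forall a b1 c1 z, D3 f a b1 c1 z = D3 f' (a *m M) (b1 *m M) (c1 *m M) (z *m M + b0).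
Proof.
move=> H a b1 c1 z.
have F : forall x y k : 'F_2, x + y + k + (x + k) = y by f2.
have H1 : forall w, D f a w = D f' (a *m M) (w *m M + b0) + dotv u a.
  by move=> w; rewrite (@Dcomp _ _ M b0 (fun x => dotv u x + c) H) dotvD F.
have H2 : forall w, D (D f a) b1 w =
    D (D f' (a *m M)) (b1 *m M) (w *m M + b0) + 0.
  by move=> w; rewrite (@Dcomp _ _ M b0 (fun _ => dotv u a) H1) F2_addxx.
by rewrite /D3 (@Dcomp _ _ M b0 (fun _ => 0) H2) addr0 addr0.
Qed.

Definition Sinv (h : boolfun 10) : nat :=
  \sum_(a : vec 10) \sum_(b : vec 10) \sum_(c : vec 10) \sum_(z : vec 10)
     nat_of_ord (D3 h a b c z).

Lemma Sinv_EA f f' : EA_equiv f f' -> Sinv f = Sinv f'.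
Proof.
case=> M [b0 [u [c [HM H]]]].
have IM : injective (fun x : vec 10 => x *m M) := can_inj (mulmxK HM).
have Iphi : injective (fun x : vec 10 => x *m M + b0).
  by move=> x y /addIr /IM.
rewrite /Sinv; symmetry; rewrite (reindex_inj IM); apply: eq_bigr => a _.
rewrite (reindex_inj IM); apply: eq_bigr => b1 _.
rewrite (reindex_inj IM); apply: eq_bigr => c1 _.
rewrite (reindex_inj Iphi); apply: eq_bigr => z _.
by rewrite (D3_EA H).
Qed.

Section Inv.
Variables (h : boolfun 10) (v beta : vec 10) (k : 'F_2).
Hypothesis Hv : forall w, D h v w = dotv beta w + k.

Lemma inv_a a b c z : D3 h (a + v) b c z = D3 h a b c z.
Proof.
have E1 : forall w, D h (a + v) w = D h a w + (dotv beta w + (dotv beta a + k)).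
  by move=> w; rewrite d1 Hv dotvD; congr (_ + _); rewrite addrA.
have E2 : forall w, D (D h (a + v)) b w = D (D h a) b w + dotv beta b.
  move=> w; rewrite (d6 E1) d2.
  by rewrite (@d4 (fun w => dotv beta w + (dotv beta a + k)) beta (dotv beta a + k)).
by rewrite /D3 (d6 E2) d2 (@d5 (fun _ => dotv beta b) (dotv beta b)) // addr0.
Qed.

Lemma inv_b a b c z : D3 h a (b + v) c z = D3 h a b c z.
Proof.
have E : forall w, D (D h a) (b + v) w = D (D h a) b w + dotv beta a.
  by move=> w; rewrite d1 (d3 h a v) (d4 Hv).
by rewrite /D3 (d6 E) d2 (@d5 (fun _ => dotv beta a) (dotv beta a)) // addr0.
Qed.

Lemma inner0 a b x : D (D (D h a) b) v x = 0.
Proof.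
have E : forall w, D (D h a) v w = dotv beta a.
  by move=> w; rewrite (d3 h a v) (d4 Hv).
by rewrite (d3 (D h a) b v) (d6 E) (@d5 (fun _ => dotv beta a) (dotv beta a)).
Qed.

Lemma inv_c a b c z : D3 h a b (c + v) z = D3 h a b c z.
Proof. by rewrite /D3 d1 inner0 addr0. Qed.

Lemma inv_z a b c z : D3 h a b c (z + v) = D3 h a b c z.
Proof.
have E : D (D3 h a b c) v z = 0.
  by rewrite /D3 (d3 (D (D h a) b) c v) (d6 (inner0 a b)) (@d5 (fun _ => 0) 0).
move: E; rewrite /D => E.
by rewrite -[LHS]addr0 -E addrA F2_addxx add0r.
Qed.
End Inv.

Definition z5 : seq bool := nseq 5 false.
Definition Db (hb : seq bool -> bool) (a : seq bool) : seq bool -> bool :=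
  fun z => hb (xorl z a) (+) hb z.
Definition D3b hb a b c := Db (Db (Db hb a) b) c.

Definition Ncount (hb : seq bool -> bool) : nat :=
  sumn [seq sumn [seq sumn [seq count (fun s4 => D3b hb (s1 ++ z5) (s2 ++ z5) (s3 ++ z5) (s4 ++ z5))
     (pts 5) | s3 <- pts 5] | s2 <- pts 5] | s1 <- pts 5].

Definition Vcheck (hb : seq bool -> bool) : bool :=
  all (fun s2 => let k := Db hb (z5 ++ s2) (nseq 10 false) in
     all (fun w => Db hb (z5 ++ s2) w == dotb (s2 ++ z5) w (+) k) (pts 10)) (pts 5).

Lemma xorl_cat s1 s2 t1 t2 : size s1 = size t1 ->
  xorl (s1 ++ s2) (t1 ++ t2) = xorl s1 t1 ++ xorl s2 t2.
Proof. by move=> H; rewrite /xorl zip_cat // map_cat. Qed.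

Lemma xorl0s n s : size s = n -> xorl (nseq n false) s = s.
Proof.
elim: s n => [|b s IH] [|n] //= [Hs]; have := IH n Hs; rewrite /xorl /= => ->.
by [].
Qed.
Lemma xorls0 n s : size s = n -> xorl s (nseq n false) = s.
Proof.
elim: s n => [|b s IH] [|n] //= [Hs]; have := IH n Hs; rewrite /xorl /= => ->.
by rewrite addbF.
Qed.

Lemma split_tovec s1 s2 : size s1 = 5%N -> size s2 = 5%N ->
  tovec 10 (s1 ++ s2) = tovec 10 (s1 ++ z5) + tovec 10 (z5 ++ s2).
Proof.
move=> H1 H2; rewrite tovecD ?size_cat ?H1 ?H2 // xorl_cat ?H1 //.
by rewrite xorls0 // xorl0s.
Qed.

Lemma pts10E : pts 10 = [seq s1 ++ s2 | s1 <- pts 5, s2 <- pts 5].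
Proof. vm_compute. reflexivity. Qed.

Lemma redV (F : vec 10 -> nat) :
  (forall x s2, size s2 = 5%N -> F (x + tovec 10 (z5 ++ s2)) = F x) ->
  \sum_(x : vec 10) F x = (32 * \sum_(s1 <- pts 5) F (tovec 10 (s1 ++ z5)))%N.
Proof.
move=> HF; rewrite sum_pts pts10E big_allpairs_dep big_distrr.
apply: eq_big_seq => s1; rewrite mem_pts => /eqP H1.
rewrite (@eq_big_seq _ _ _ _ _ _ (fun _ => F (tovec 10 (s1 ++ z5)))); last first.
  by move=> s2; rewrite mem_pts => /eqP H2; rewrite split_tovec // HF.
by rewrite big_const_seq count_predT size_pts iter_addn addn0 mulnC.
Qed.



Definition rep (h : boolfun 10) (hb : seq bool -> bool) :=
  forall s, size s = 10%nat -> h (tovec 10 s) = b2F (hb s).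

Lemma repD h hb a : rep h hb -> size a = 10%nat -> rep (D h (tovec 10 a)) (Db hb a).
Proof.
move=> H Ha s Hs; rewrite /D /Db tovecD ?Hs ?Ha // !H ?size_xorl ?Hs ?Ha //.
by rewrite b2F_add.
Qed.

Lemma repD3 h hb a b c : rep h hb -> size a = 10%nat -> size b = 10%nat -> size c = 10%nat ->
  rep (D3 h (tovec 10 a) (tovec 10 b) (tovec 10 c)) (D3b hb a b c).
Proof. by move=> H Ha Hb Hc; do 3 apply: repD => //. Qed.

Lemma HV_of_check h hb : rep h hb -> Vcheck hb -> forall s2, size s2 = 5%nat ->
  forall w, D h (tovec 10 (z5 ++ s2)) w =
    dotv (tovec 10 (s2 ++ z5)) w + b2F (Db hb (z5 ++ s2) (nseq 10 false)).
Proof.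
move=> H /allP Hc s2 Hs2 w.
have Sa : size (z5 ++ s2) = 10%nat by rewrite size_cat Hs2.
have Sb : size (s2 ++ z5) = 10%nat by rewrite size_cat Hs2.
rewrite -(ofvecK w) (repD H Sa) ?size_ofvec // dotv_tovec ?size_ofvec // b2F_add.
have := Hc s2; rewrite mem_pts Hs2 => /(_ isT) /allP /(_ (ofvec w)).
by rewrite mem_pts size_ofvec => /(_ isT) /eqP ->.
Qed.

Definition ev (s : seq bool) : vec 10 := tovec 10 (s ++ z5).

Lemma Sinv_red h hb : rep h hb -> Vcheck hb ->
  Sinv h = (32 * (\sum_(s1 <- pts 5) (32 * (\sum_(s2 <- pts 5) (32 * (\sum_(s3 <- pts 5)
     (32 * \sum_(s4 <- pts 5) nat_of_ord (D3 h (ev s1) (ev s2) (ev s3) (ev s4)))))))))%nat.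
Proof.
move=> H Hc.
have HV := HV_of_check H Hc.
rewrite /Sinv redV; last first.
  move=> x s2 Hs2; apply: eq_bigr => b _; apply: eq_bigr => c _; apply: eq_bigr => z _.
  by rewrite (inv_a (HV s2 Hs2)).
congr (_ * _)%nat; apply: eq_bigr => s1 _.
rewrite redV; last first.
  move=> x s2 Hs2; apply: eq_bigr => c _; apply: eq_bigr => z _.
  by rewrite (inv_b (HV s2 Hs2)).
congr (_ * _)%nat; apply: eq_bigr => s2 _.
rewrite redV; last first.
  move=> x s3 Hs3; apply: eq_bigr => z _.
  by rewrite (inv_c (HV s3 Hs3)).
congr (_ * _)%nat; apply: eq_bigr => s3 _.
rewrite redV; last first.
  by move=> x s4 Hs4; rewrite (inv_z (HV s4 Hs4)).
by [].
Qed.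

From Stdlib Require Import NArith.

Definition sumL (l : seq N) : N := foldr N.add 0%num l.

Lemma NsumE (T : Type) (L : seq T) (F : T -> nat) :
  N.of_nat (\sum_(s <- L) F s)%nat = sumL [seq N.of_nat (F s) | s <- L].
Proof.
elim: L => [|x L IH]; first by rewrite big_nil.
by rewrite big_cons /= Nat2N.inj_add IH.
Qed.

Definition cnt hb s1 s2 s3 : nat :=
  count (fun s4 => D3b hb (s1 ++ z5) (s2 ++ z5) (s3 ++ z5) (s4 ++ z5)) (pts 5).

Definition NR (hb : seq bool -> bool) : N :=
  (32 * sumL [seq 32 * sumL [seq 32 * sumL [seq 32 * N.of_nat (cnt hb s1 s2 s3)
     | s3 <- pts 5] | s2 <- pts 5] | s1 <- pts 5])%num.

Lemma sum_count (T : Type) (L : seq T) (P : pred T) :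
  (\sum_(s <- L) (P s : nat))%nat = count P L.
Proof.
elim: L => [|x L IH]; first by rewrite big_nil.
by rewrite big_cons IH.
Qed.

Lemma size5 s : s \in pts 5 -> size s = 5%nat.
Proof. by rewrite mem_pts => /eqP. Qed.

Lemma inner_count h hb s1 s2 s3 : rep h hb ->
  s1 \in pts 5 -> s2 \in pts 5 -> s3 \in pts 5 ->
  (\sum_(s4 <- pts 5) nat_of_ord (D3 h (ev s1) (ev s2) (ev s3) (ev s4)))%nat = cnt hb s1 s2 s3.
Proof.
move=> H /size5 H1 /size5 H2 /size5 H3.
rewrite /cnt -sum_count big_seq [RHS]big_seq; apply: eq_bigr => s4 /size5 H4.
by rewrite /ev (repD3 H) ?b2F_val // size_cat ?H1 ?H2 ?H3 ?H4.
Qed.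

Lemma Sinv_NR h hb : rep h hb -> Vcheck hb -> N.of_nat (Sinv h) = NR hb.
Proof.
move=> H Hc; rewrite (Sinv_red H Hc) Nat2N.inj_mul NsumE /NR.
congr (_ * sumL _)%num; apply/eq_in_map => s1 H1.
rewrite Nat2N.inj_mul NsumE; congr (_ * sumL _)%num; apply/eq_in_map => s2 H2.
rewrite Nat2N.inj_mul NsumE; congr (_ * sumL _)%num; apply/eq_in_map => s3 H3.
by rewrite Nat2N.inj_mul (inner_count H).
Qed.

Lemma NR_diff : N.eqb (NR f10b) (NR f10b') = false.
Proof. vm_compute. reflexivity. Qed.

Lemma rep10 : rep f10 f10b. Proof. exact: f10_tovec. Qed.
Lemma rep10' : rep f10' f10b'. Proof. exact: f10'_tovec. Qed.
Lemma V10 : Vcheck f10b. Proof. vm_compute. reflexivity. Qed.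
Lemma V10' : Vcheck f10b'. Proof. vm_compute. reflexivity. Qed.

Lemma nonEA : ~ EA_equiv f10 f10'.
Proof.
move=> /Sinv_EA E.
have := NR_diff; rewrite -(Sinv_NR rep10 V10) -(Sinv_NR rep10' V10') E.
by rewrite N.eqb_refl.
Qed.

Lemma bc1 : bentcheck f10b. Proof. vm_compute. reflexivity. Qed.
Lemma bc2 : bentcheck f10b'. Proof. vm_compute. reflexivity. Qed.

Theorem mainTheorem5 :
  is_bent f10 /\ is_bent f10' /\ ~ EA_equiv f10 f10' /\
  inc_iso (dev_inc f10) (dev_inc f10').
Proof.
split; first exact: (bent_of_check f10_tovec bc1).
split; first exact: (bent_of_check f10'_tovec bc2).
split; first exact: nonEA.
exact: iso_part.
Qed.
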